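(* Let $\Lambda$ be a row-finite $k$-graph with no sources and let $\alpha$ be an action of $\mathbb{Z}^l$ on $\Lambda$ by automorphisms. Then there is a unique homeomorphism $x\mapsto(x,\infty)$ from $\Lambda^\infty$ onto $(\Lambda\times_\alpha\mathbb{Z}^l)^\infty$ such that $(x,\infty)((0,0),(p,0))=(x(0,p),0)$ for all $p\in\mathbb{N}^k$.
   Context: A $k$-graph is a countable category $\Lambda$ with a functor $d:\Lambda\to\mathbb{N}^k$ with the unique factorisation property; vertices are degree-$0$ morphisms; row-finite means each $v\Lambda^n$ is finite, no sources means each $v\Lambda^n$ is nonempty. An automorphism is a bijective degree-preserving functor. $\Lambda\times_\alpha\mathbb{Z}^l$ is the $(k+l)$-graph with morphisms $\Lambda\times\mathbb{N}^l$, degree $(d(\lambda),m)\in\mathbb{N}^k\times\mathbb{N}^l$, $r(\lambda,m)=(r(\lambda),0)$, $s(\lambda,m)=(\alpha_{-m}(s(\lambda)),0)$, $(\mu,m)(\nu,n)=(\mu\alpha_m(\nu),m+n)$. For a $j$-graph $\Gamma$, $\Gamma^\infty$ is the set of degree-preserving functors $x:\Omega_j\to\Gamma$, where $\Omega_j=\{(a,b)\in\mathbb{N}^j\times\mathbb{N}^j:a\le b\}$ with $r(a,b)=(a,a)$, $s(a,b)=(b,b)$, $(a,b)(b,c)=(a,c)$, $d(a,b)=b-a$. $\Gamma^\infty$ has the topology with basis the cylinder sets $\lambda\Gamma^\infty=\{x\in\Gamma^\infty:x(0,d(\lambda))=\lambda\}$, $\lambda\in\Gamma$. *)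

(* Defs.v *)
From HB Require Import structures.
From mathcomp Require Import all_boot all_order all_algebra.

Set Implicit Arguments.
Unset Strict Implicit.
Unset Printing Implicit Defensive.

Import GRing.Theory.

Definition Nk (k : nat) := {ffun 'I_k -> nat}.
Definition nk0 (k : nat) : Nk k := [ffun => 0%N].
Definition nk_add k (m n : Nk k) : Nk k := [ffun i => (m i + n i)%N].
Definition nk_sub k (m n : Nk k) : Nk k := [ffun i => (m i - n i)%N].
Definition nk_le k (m n : Nk k) : bool := [forall i, m i <= n i].
Definition nk_join k l (m : Nk k) (n : Nk l) : Nk (k + l) :=
  [ffun i => match split i with inl a => m a | inr b => n b end].

Definition Zl (l : nat) := {ffun 'I_l -> int}.
Definition z0 (l : nat) : Zl l := [ffun => 0%R].
Definition zadd l (m n : Zl l) : Zl l := [ffun i => (m i + n i)%R].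
Definition zneg l (m : Zl l) : Zl l := [ffun i => (- m i)%R].
Definition zofnk l (m : Nk l) : Zl l := [ffun i => Posz (m i)].

Lemma nk_le_refl k (a : Nk k) : nk_le a a.
Proof. by apply/forallP => i. Qed.

Lemma nk_le0 k (a : Nk k) : nk_le (nk0 k) a.
Proof. by apply/forallP => i; rewrite ffunE. Qed.

(* A small category is given by its (countable) set of morphisms; objects
   are identified with identity morphisms; kr/ks are range/source,
   kcomp f g is the composite f g (meaningful when ks f = kr g). *)
Record kraw (k : nat) := KRaw {
  kmor : countType;
  kr : kmor -> kmor;
  ks : kmor -> kmor;
  kcomp : kmor -> kmor -> kmor;
  kdeg : kmor -> Nk k }.

Arguments kr {k G} f : rename.
Arguments ks {k G} f : rename.
Arguments kcomp {k G} f g : rename.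
Arguments kdeg {k G} f : rename.

Definition is_kgraph k (G : kraw k) : Prop :=
  (forall f : kmor G, kr (kr f) = kr f) /\
  (forall f : kmor G, ks (kr f) = kr f) /\
  (forall f : kmor G, kr (ks f) = ks f) /\
  (forall f : kmor G, ks (ks f) = ks f) /\
  (forall f : kmor G, kcomp (kr f) f = f) /\
  (forall f : kmor G, kcomp f (ks f) = f) /\
  (forall f g : kmor G, ks f = kr g ->
      kr (kcomp f g) = kr f /\ ks (kcomp f g) = ks g) /\
  (forall f g h : kmor G, ks f = kr g -> ks g = kr h ->
      kcomp (kcomp f g) h = kcomp f (kcomp g h)) /\
  (forall f g : kmor G, ks f = kr g ->
      kdeg (kcomp f g) = nk_add (kdeg f) (kdeg g)) /\
  (forall (lam : kmor G) (m n : Nk k), kdeg lam = nk_add m n ->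
      exists! mn : kmor G * kmor G,
        ks mn.1 = kr mn.2 /\ kcomp mn.1 mn.2 = lam /\
        kdeg mn.1 = m /\ kdeg mn.2 = n).

Definition is_vertex k (G : kraw k) (v : kmor G) : Prop := kdeg v = nk0 k.

Definition row_finite k (G : kraw k) : Prop :=
  forall (v : kmor G) (n : Nk k), is_vertex v ->
    exists s : seq (kmor G), forall lam, kr lam = v -> kdeg lam = n -> lam \in s.

Definition no_sources k (G : kraw k) : Prop :=
  forall (v : kmor G) (n : Nk k), is_vertex v ->
    exists lam : kmor G, kr lam = v /\ kdeg lam = n.

Definition is_automorphism k (G : kraw k) (phi : kmor G -> kmor G) : Prop :=
  bijective phi /\
  (forall f, kdeg (phi f) = kdeg f) /\
  (forall f, phi (kr f) = kr (phi f)) /\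
  (forall f, phi (ks f) = ks (phi f)) /\
  (forall f g, ks f = kr g -> phi (kcomp f g) = kcomp (phi f) (phi g)).

Definition is_action k l (G : kraw k) (alpha : Zl l -> kmor G -> kmor G) : Prop :=
  (forall m, is_automorphism (alpha m)) /\
  (forall f, alpha (z0 l) f = f) /\
  (forall m n f, alpha (zadd m n) f = alpha m (alpha n f)).

Definition cross k l (G : kraw k) (alpha : Zl l -> kmor G -> kmor G) : kraw (k + l) :=
  @KRaw (k + l) (kmor G * Nk l)%type
    (fun p => (kr p.1, nk0 l))
    (fun p => (alpha (zneg (zofnk p.2)) (ks p.1), nk0 l))
    (fun p q => (kcomp p.1 (alpha (zofnk p.2) q.1), nk_add p.2 q.2))
    (fun p => nk_join (kdeg p.1) p.2).
Arguments cross {k l} G alpha.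

Definition Omega (j : nat) := {ab : Nk j * Nk j | nk_le ab.1 ab.2}.
Definition omk j (a b : Nk j) (h : nk_le a b) : Omega j :=
  exist (fun ab : Nk j * Nk j => nk_le ab.1 ab.2) (a, b) h.

Definition is_inf_path j (G : kraw j) (x : Omega j -> kmor G) : Prop :=
  (forall a b (h : nk_le a b), kdeg (x (omk h)) = nk_sub b a) /\
  (forall a b (h : nk_le a b), kr (x (omk h)) = x (omk (nk_le_refl a))) /\
  (forall a b (h : nk_le a b), ks (x (omk h)) = x (omk (nk_le_refl b))) /\
  (forall a b c (h1 : nk_le a b) (h2 : nk_le b c) (h3 : nk_le a c),
      kcomp (x (omk h1)) (x (omk h2)) = x (omk h3)).

Record ipath j (G : kraw j) := IPath {
  ipfun :> Omega j -> kmor G;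
  ipP : is_inf_path ipfun }.

Definition at0 j (G : kraw j) (x : ipath G) (p : Nk j) : kmor G :=
  x (omk (nk_le0 p)).

Definition in_cyl j (G : kraw j) (lam : kmor G) (x : ipath G) : Prop :=
  at0 x (kdeg lam) = lam.

Definition is_open j (G : kraw j) (U : ipath G -> Prop) : Prop :=
  forall x, U x -> exists lam : kmor G, in_cyl lam x /\ forall y, in_cyl lam y -> U y.

Definition pcontinuous j1 j2 (G1 : kraw j1) (G2 : kraw j2)
  (f : ipath G1 -> ipath G2) : Prop :=
  forall V, is_open V -> is_open (fun x => V (f x)).

Definition is_homeo j1 j2 (G1 : kraw j1) (G2 : kraw j2)
  (f : ipath G1 -> ipath G2) : Prop :=
  exists g : ipath G2 -> ipath G1,
    cancel f g /\ cancel g f /\ pcontinuous f /\ pcontinuous g.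

Definition extends_prop k l (G : kraw k) (alpha : Zl l -> kmor G -> kmor G)
  (h : ipath G -> ipath (cross G alpha)) : Prop :=
  forall (x : ipath G) (p : Nk k),
    at0 (h x) (nk_join p (nk0 l)) = (at0 x p, nk0 l).

(* Main.v *)
Require Import Defs.
From mathcomp Require Import all_boot all_order all_algebra.
From mathcomp Require Import zify.
From Stdlib Require Import FunctionalExtensionality ProofIrrelevance.
Set Implicit Arguments. Unset Strict Implicit. Unset Printing Implicit Defensive.
Import GRing.Theory.

Definition nkfst k l (a : Nk (k + l)) : Nk k := [ffun i => a (lshift l i)].
Definition nksnd k l (a : Nk (k + l)) : Nk l := [ffun i => a (rshift k i)].

Lemma fst_join k l (m : Nk k) (n : Nk l) : nkfst (nk_join m n) = m.
Proof. by apply/ffunP => i; rewrite !ffunE (unsplitK (inl _ i)). Qed.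
Lemma snd_join k l (m : Nk k) (n : Nk l) : nksnd (nk_join m n) = n.
Proof. by apply/ffunP => i; rewrite !ffunE (unsplitK (inr _ i)). Qed.
Lemma join_fs k l (a : Nk (k + l)) : nk_join (nkfst a) (nksnd a) = a.
Proof. by apply/ffunP => i; rewrite !ffunE; case: split_ordP => j ->; rewrite ffunE. Qed.
Lemma join_inj k l (m m' : Nk k) (n n' : Nk l) :
  nk_join m n = nk_join m' n' -> m = m' /\ n = n'.
Proof. move=> e; split; [rewrite -(fst_join m n) e fst_join | rewrite -(snd_join m n) e snd_join]; done. Qed.
Lemma fst_sub k l (a b : Nk (k + l)) : nkfst (nk_sub a b) = nk_sub (nkfst a) (nkfst b).
Proof. by apply/ffunP => i; rewrite !ffunE. Qed.
Lemma snd_sub k l (a b : Nk (k + l)) : nksnd (nk_sub a b) = nk_sub (nksnd a) (nksnd b).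
Proof. by apply/ffunP => i; rewrite !ffunE. Qed.
Lemma sub_join k l (a b : Nk (k + l)) :
  nk_sub a b = nk_join (nk_sub (nkfst a) (nkfst b)) (nk_sub (nksnd a) (nksnd b)).
Proof. by rewrite -fst_sub -snd_sub join_fs. Qed.
Lemma fst_le k l (a b : Nk (k + l)) : nk_le a b -> nk_le (nkfst a) (nkfst b).
Proof. by move/forallP => h; apply/forallP => i; rewrite !ffunE. Qed.
Lemma snd_le k l (a b : Nk (k + l)) : nk_le a b -> nk_le (nksnd a) (nksnd b).
Proof. by move/forallP => h; apply/forallP => i; rewrite !ffunE. Qed.
Lemma join_le k l (a b : Nk k) (c d : Nk l) : nk_le a b -> nk_le c d ->
  nk_le (nk_join a c) (nk_join b d).
Proof.
move=> /forallP h1 /forallP h2; apply/forallP => i; rewrite !ffunE.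
by case: (split i).
Qed.
Lemma sub_nn k (a : Nk k) : nk_sub a a = nk0 k.
Proof. by apply/ffunP => i; rewrite !ffunE subnn. Qed.
Lemma sub_n0 k (a : Nk k) : nk_sub a (nk0 k) = a.
Proof. by apply/ffunP => i; rewrite !ffunE subn0. Qed.
Lemma add_sub k (a b c : Nk k) : nk_le a b -> nk_le b c ->
  nk_add (nk_sub b a) (nk_sub c b) = nk_sub c a.
Proof. move=> /forallP h1 /forallP h2; apply/ffunP => i; rewrite !ffunE.
have := h1 i; have := h2 i; lia. Qed.
Lemma add_sub0 k (a b : Nk k) : nk_le a b -> nk_add a (nk_sub b a) = b.
Proof. move=> /forallP h1; apply/ffunP => i; rewrite !ffunE.
by rewrite subnKC. Qed.
Lemma add_cancel0 k (a b : Nk k) : a = nk_add a b -> b = nk0 k.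
Proof. move=> e; apply/ffunP => i; have := congr1 (fun f : Nk k => f i) e; rewrite /= !ffunE; lia. Qed.
Lemma add_cancel0' k (a b : Nk k) : a = nk_add b a -> b = nk0 k.
Proof. move=> e; apply/ffunP => i; have := congr1 (fun f : Nk k => f i) e; rewrite /= !ffunE; lia. Qed.
Lemma add00 k : nk_add (nk0 k) (nk0 k) = nk0 k.
Proof. by apply/ffunP => i; rewrite !ffunE. Qed.
Lemma join00 k l : nk_join (nk0 k) (nk0 l) = nk0 (k + l).
Proof. by apply/ffunP => i; rewrite !ffunE; case: split => j; rewrite ffunE. Qed.
Lemma fst0 k l : nkfst (nk0 (k + l)) = nk0 k.
Proof. by rewrite -join00 fst_join. Qed.
Lemma snd0 k l : nksnd (nk0 (k + l)) = nk0 l.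
Proof. by rewrite -join00 snd_join. Qed.

Lemma zneg0 l : zneg (zofnk (nk0 l)) = z0 l.
Proof. by apply/ffunP => i; rewrite !ffunE. Qed.
Lemma zofnk0 l : zofnk (nk0 l) = z0 l.
Proof. by apply/ffunP => i; rewrite !ffunE. Qed.
Lemma zaddNz l (m : Zl l) : zadd (zneg m) m = z0 l.
Proof. by apply/ffunP => i; rewrite !ffunE; lia. Qed.
Lemma zadd_sub1 l (m n : Nk l) : nk_le m n ->
  zadd (zneg (zofnk (nk_sub n m))) (zneg (zofnk m)) = zneg (zofnk n).
Proof. move=> /forallP h; apply/ffunP => i; rewrite !ffunE; have := h i; lia. Qed.
Lemma zadd_sub2 l (m n : Nk l) : nk_le m n ->
  zadd (zofnk (nk_sub n m)) (zneg (zofnk n)) = zneg (zofnk m).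
Proof. move=> /forallP h; apply/ffunP => i; rewrite !ffunE; have := h i; lia. Qed.

Lemma omk_eq j (a a' b b' : Nk j) (h : nk_le a b) (h' : nk_le a' b') :
  a = a' -> b = b' -> omk h = omk h'.
Proof. move=> ??; subst; by rewrite (bool_irrelevance h h'). Qed.

Lemma omk_irr j (a b : Nk j) (h h' : nk_le a b) : omk h = omk h'.
Proof. by rewrite (bool_irrelevance h h'). Qed.
Lemma xeq j T (x : Omega j -> T) (a a' b b' : Nk j) (h : nk_le a b) (h' : nk_le a' b') :
  a = a' -> b = b' -> x (omk h) = x (omk h').
Proof. by move=> e1 e2; rewrite (omk_eq h h' e1 e2). Qed.

Lemma ip_deg j (G : kraw j) (x : ipath G) a b (h : nk_le a b) :
  kdeg (x (omk h)) = nk_sub b a.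
Proof. by case: (ipP x). Qed.
Lemma ip_r j (G : kraw j) (x : ipath G) a b (h : nk_le a b) :
  kr (x (omk h)) = x (omk (nk_le_refl a)).
Proof. by case: (ipP x) => _ []. Qed.
Lemma ip_s j (G : kraw j) (x : ipath G) a b (h : nk_le a b) :
  ks (x (omk h)) = x (omk (nk_le_refl b)).
Proof. by case: (ipP x) => _ [] _ []. Qed.
Lemma ip_c j (G : kraw j) (x : ipath G) a b c (h1 : nk_le a b) (h2 : nk_le b c)
  (h3 : nk_le a c) : kcomp (x (omk h1)) (x (omk h2)) = x (omk h3).
Proof. by case: (ipP x) => _ [] _ [] _; apply. Qed.

Lemma ipath_ext j (G : kraw j) (x y : ipath G) :
  (forall a b (h : nk_le a b), x (omk h) = y (omk h)) -> x = y.
Proof.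
case: x => f Pf; case: y => g Pg /= e.
have efg : f = g.
  apply: functional_extensionality => -[[a b] h]; exact: e.
subst g; by rewrite (proof_irrelevance _ Pf Pg).
Qed.

Lemma zaddzN l (m : Zl l) : zadd m (zneg m) = z0 l.
Proof. by apply/ffunP => i; rewrite !ffunE; lia. Qed.

Lemma le_join_fst0 k l (a b : Nk (k + l)) :
  nk_le (nkfst a) (nkfst b) -> nk_le (nk_join (nkfst a) (nk0 l)) b.
Proof. move=> h; rewrite -[X in nk_le _ X](join_fs b); apply: join_le => //; exact: nk_le0. Qed.

Section S.
Variables (k l : nat) (G : kraw k) (alpha : Zl l -> kmor G -> kmor G).
Hypothesis HG : is_kgraph G.
Hypothesis Ha : is_action alpha.

Lemma vertex_id (v : kmor G) : kdeg v = nk0 k -> kr v = v /\ ks v = v.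
Proof.
case: HG => Hrr [Hsr [Hrs [Hss [Hlid [Hrid [Hcomp [Hassoc [Hdeg Hfact]]]]]]]] dv.
have ds : kdeg (ks v) = nk0 k.
  apply: (@add_cancel0 _ (kdeg v)); rewrite -Hdeg; [by rewrite Hrid | by rewrite Hrs].
have dr : kdeg (kr v) = nk0 k.
  apply: (@add_cancel0' _ (kdeg v)); rewrite -Hdeg; [by rewrite Hlid | by rewrite Hsr].
have [mn [_ Hu]] := Hfact v (nk0 k) (nk0 k) (etrans dv (esym (add00 k))).
have e1 := Hu (v, ks v) (conj (esym (Hrs v)) (conj (Hrid v) (conj dv ds))).
have e2 := Hu (kr v, v) (conj (Hsr v) (conj (Hlid v) (conj dr dv))).
by case: (etrans (esym e1) e2) => <- ->.
Qed.

Lemma alpha0 f : alpha (z0 l) f = f.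
Proof. by case: Ha => _ []. Qed.
Lemma alpha_comp m n f : alpha m (alpha n f) = alpha (zadd m n) f.
Proof. by case: Ha => _ [] _ ->. Qed.
Lemma alpha_deg m f : kdeg (alpha m f) = kdeg f.
Proof. by case: Ha => /(_ m) [] _ []. Qed.
Lemma alpha_kr m f : alpha m (kr f) = kr (alpha m f).
Proof. by case: Ha => /(_ m) [] _ [] _ []. Qed.
Lemma alpha_ks m f : alpha m (ks f) = ks (alpha m f).
Proof. by case: Ha => /(_ m) [] _ [] _ [] _ []. Qed.
Lemma alpha_kcomp m f g : ks f = kr g -> alpha m (kcomp f g) = kcomp (alpha m f) (alpha m g).
Proof. by case: Ha => /(_ m) [] _ [] _ [] _ [] _ c _; apply: c. Qed.

Definition hfun (x : ipath G) (o : Omega (k + l)) : kmor (cross G alpha) :=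
  ((alpha (zneg (zofnk (nksnd (sval o).1))) (x (omk (fst_le (svalP o)))),
   nk_sub (nksnd (sval o).2) (nksnd (sval o).1)) : kmor G * Nk l).

Lemma hfunE x a b (h : nk_le a b) :
  hfun x (omk h) = (alpha (zneg (zofnk (nksnd a))) (x (omk (fst_le h))),
   nk_sub (nksnd b) (nksnd a)).
Proof. rewrite /hfun; congr (alpha _ (x _), _); exact: omk_irr. Qed.

Lemma hpathP x : is_inf_path (hfun x).
Proof.
split; [|split; [|split]].
- move=> a b h /=; by rewrite alpha_deg ip_deg [RHS]sub_join.
- move=> a b h; rewrite /hfun /= -alpha_kr ip_r sub_nn; congr (alpha _ (x _), _).
  exact: omk_irr.
- move=> a b h; rewrite /hfun /= -alpha_ks ip_s alpha_comp zadd_sub1 ?(snd_le h) // sub_nn.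
  congr (alpha _ (x _), _); exact: omk_irr.
- move=> a b c h1 h2 h3; rewrite /hfun /=.
  rewrite alpha_comp zadd_sub2 ?(snd_le h1) // -alpha_kcomp.
    rewrite (ip_c x _ _ (fst_le h3)) add_sub; [congr (alpha _ (x _), _); exact: omk_irr | exact: snd_le h1 | exact: snd_le h2].
  by rewrite ip_s ip_r; congr (x _); exact: omk_irr.
Qed.

Definition hpath x : ipath (cross G alpha) := IPath (hpathP x).

Lemma at0_h x p q : at0 (hpath x) (nk_join p q) = (at0 x p, q).
Proof.
rewrite /at0 /= hfunE snd0 zneg0 alpha0 snd_join sub_n0; congr (_, _).
apply: xeq; [exact: fst0 | exact: fst_join].
Qed.

Lemma ydeg1 (y : ipath (cross G alpha)) a b (h : nk_le a b) :
  kdeg (y (omk h)).1 = nk_sub (nkfst b) (nkfst a).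
Proof. by have := ip_deg y h; rewrite /= sub_join => /join_inj []. Qed.
Lemma ydeg2 (y : ipath (cross G alpha)) a b (h : nk_le a b) :
  (y (omk h)).2 = nk_sub (nksnd b) (nksnd a).
Proof. by have := ip_deg y h; rewrite /= sub_join => /join_inj []. Qed.

Definition gfun (y : ipath (cross G alpha)) (o : Omega k) : kmor G :=
  (y (omk (join_le (svalP o) (nk_le_refl (nk0 l))))).1.

Lemma gfunE y a b (h : nk_le a b) :
  gfun y (omk h) = (y (omk (join_le h (nk_le_refl (nk0 l))))).1.
Proof. rewrite /gfun; congr (y _).1; exact: omk_irr. Qed.

Lemma gpathP y : is_inf_path (gfun y).
Proof.
split; [|split; [|split]].
- by move=> a b h; rewrite !gfunE ydeg1 !fst_join.
- move=> a b h; rewrite !gfunE; have e := congr1 fst (ip_r y (join_le h (nk_le_refl (nk0 l)))).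
  simpl in e; rewrite e; congr (y _).1; exact: omk_irr.
- move=> a b h; rewrite !gfunE; have e := congr1 fst (ip_s y (join_le h (nk_le_refl (nk0 l)))).
  simpl in e; rewrite ydeg2 !snd_join sub_nn zneg0 alpha0 in e.
  rewrite e; congr (y _).1; exact: omk_irr.
- move=> a b c h1 h2 h3; rewrite !gfunE.
  have e := congr1 fst (ip_c y (join_le h1 (nk_le_refl (nk0 l)))
     (join_le h2 (nk_le_refl (nk0 l))) (join_le h3 (nk_le_refl (nk0 l)))).
  by simpl in e; rewrite ydeg2 !snd_join sub_nn zofnk0 alpha0 in e.
Qed.

Definition gpath y : ipath G := IPath (gpathP y).

Lemma at0_g y p : at0 (gpath y) p = (at0 y (nk_join p (nk0 l))).1.
Proof. rewrite /at0 /= /gfun /=; congr (_).1; apply: xeq => //; exact: join00. Qed.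

Lemma cancel_hg : cancel hpath gpath.
Proof.
move=> x; apply: ipath_ext => a b h.
change (gfun (hpath x) (omk h) = x (omk h)); rewrite gfunE.
change ((hfun x (omk (join_le h (nk_le_refl (nk0 l))))).1 = x (omk h)); rewrite hfunE /=.
rewrite snd_join zneg0 alpha0; apply: xeq; exact: fst_join.
Qed.

Lemma cancel_gh : cancel gpath hpath.
Proof.
case: (HG) => Hrr [Hsr [Hrs [Hss [Hlid [Hrid [Hcomp [Hassoc [Hdeg Hfact]]]]]]]].
move=> y; apply: ipath_ext => a b h.
change (hfun (gpath y) (omk h) = y (omk h)); rewrite hfunE.
change ((alpha (zneg (zofnk (nksnd a))) (gfun y (omk (fst_le h))), nk_sub (nksnd b) (nksnd a)) = y (omk h)); rewrite gfunE.
rewrite [RHS]surjective_pairing ydeg2; congr (_, _).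
set P := nk_join (nkfst a) (nk0 l).
set Q := nk_join (nkfst b) (nk0 l).
have hPa : nk_le P a by apply: le_join_fst0; exact: nk_le_refl.
have hQb : nk_le Q b by apply: le_join_fst0; exact: nk_le_refl.
have hPb : nk_le P b by apply: le_join_fst0; exact: fst_le.
set hPQ := join_le (fst_le h) (nk_le_refl (nk0 l)).
have s1 : (y (omk hPb)).1 = alpha (zofnk (nksnd a)) (y (omk h)).1.
  have e1 := congr1 fst (ip_c y hPa h hPb); simpl in e1.
  have d2 : (y (omk hPa)).2 = nksnd a by rewrite ydeg2 snd_join sub_n0.
  have d1 : kdeg (y (omk hPa)).1 = nk0 k by rewrite ydeg1 fst_join sub_nn.
  have [vr vs] := vertex_id d1.
  have cs := congr1 fst (etrans (ip_s y hPa) (esym (ip_r y h))); simpl in cs.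
  rewrite d2 vs in cs.
  rewrite -e1 d2.
  have kv : kr (alpha (zofnk (nksnd a)) (y (omk h)).1) = (y (omk hPa)).1.
    by rewrite -alpha_kr -cs alpha_comp zaddzN alpha0.
  by rewrite -{1}kv Hlid.
have s2 : (y (omk hPb)).1 = (y (omk hPQ)).1.
  have e2 := congr1 fst (ip_c y hPQ hQb hPb); simpl in e2.
  have d2 : (y (omk hPQ)).2 = nk0 l by rewrite ydeg2 !snd_join sub_nn.
  have d1 : kdeg (y (omk hQb)).1 = nk0 k by rewrite ydeg1 fst_join sub_nn.
  have [vr vs] := vertex_id d1.
  have cs := congr1 fst (etrans (ip_s y hPQ) (esym (ip_r y hQb))); simpl in cs.
  rewrite d2 zneg0 alpha0 vr in cs.
  by rewrite -e2 d2 zofnk0 alpha0 -cs Hrid.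
rewrite -s2 s1 alpha_comp zaddNz alpha0; done.
Qed.

Lemma path_det (x y : ipath G) : (forall p, at0 x p = at0 y p) -> x = y.
Proof.
case: (HG) => Hrr [Hsr [Hrs [Hss [Hlid [Hrid [Hcomp [Hassoc [Hdeg Hfact]]]]]]]].
move=> e; apply: ipath_ext => a b h.
have ha := nk_le0 a; have hb := nk_le0 b.
have c1 := ip_c x ha h hb; have c2 := ip_c y ha h hb.
have cx : ks (x (omk ha)) = kr (x (omk h)) by rewrite ip_s ip_r.
have cy : ks (y (omk ha)) = kr (y (omk h)) by rewrite ip_s ip_r.
have hd : kdeg (x (omk hb)) = nk_add (kdeg (x (omk ha))) (kdeg (x (omk h))) by rewrite -c1 Hdeg.
have [mn [_ Hu]] := Hfact _ _ _ hd.
have e1 := Hu (x (omk ha), x (omk h)) (conj cx (conj c1 (conj erefl erefl))).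
have e2 : mn = (y (omk ha), y (omk h)).
  apply: Hu; split => //; split; last by rewrite /= !ip_deg.
  rewrite c2 (omk_irr hb (nk_le0 b)); exact: (esym (e b)).
have := etrans (esym e1) e2; case=> _ ->; done.
Qed.
End S.

Theorem proposition4p4 (k l : nat) (G : kraw k) (alpha : Zl l -> kmor G -> kmor G) :
  is_kgraph G -> row_finite G -> no_sources G -> is_action alpha ->
  exists h : ipath G -> ipath (cross G alpha),
    (is_homeo h /\ extends_prop h) /\
    forall h' : ipath G -> ipath (cross G alpha),
      is_homeo h' /\ extends_prop h' -> h' = h.
Proof.
move=> HG _ _ Ha.
exists (hpath Ha); split; [split|].
- exists (gpath Ha); split; [exact: cancel_hg|split; [exact: cancel_gh|split]].
  + move=> V HV x Vx; have [[lam m] [Hc HU]] := HV _ Vx.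
    change (at0 (hpath Ha x) (nk_join (kdeg lam) m) = (lam, m)) in Hc; rewrite at0_h in Hc; have {}Hc := congr1 fst Hc; simpl in Hc.
    exists lam; split; first exact: Hc.
    move=> z Hz; apply: HU; change (at0 (hpath Ha z) (nk_join (kdeg lam) m) = (lam, m)); rewrite at0_h Hz //.
  + move=> V HV y Vy; have [lam [Hc HU]] := HV _ Vy.
    rewrite /in_cyl at0_g in Hc.
    exists ((lam, nk0 l) : kmor G * Nk l); split.
      rewrite /in_cyl /= [LHS]surjective_pairing Hc; congr (_, _).
      by rewrite /at0 ydeg2 snd_join snd0 sub_nn.
    move=> z Hz; apply: HU; rewrite /in_cyl at0_g; move: Hz; rewrite /in_cyl /= => ->.
    done.
- by move=> x p; rewrite at0_h.
- move=> h' [_ Hext]; apply: functional_extensionality => x.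
  rewrite -(cancel_gh HG Ha (h' x)); congr (hpath Ha _).
  apply: (path_det HG) => p; by rewrite at0_g Hext.
Qed.
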